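(* Let $p,q\in\mathbb N$ and $A\in\mathrm{Rec}_{p\times q}(\mathbb Q)$. Then there exists a non-zero natural integer $N$ such that $N^{n+1}A[U,W]\in\mathbb Z$ for all $n\in\mathbb N$ and all $(U,W)\in\mathcal M_{p\times q}^n$.
   Context: $\mathcal M_{p\times q}^n$ is the set of pairs $(U,W)$ of words of common length $n$ with $U\in\{0,\dots,p-1\}^n$, $W\in\{0,\dots,q-1\}^n$, $\mathcal M_{p\times q}=\bigcup_n\mathcal M_{p\times q}^n$. For $A:\mathcal M_{p\times q}\to\mathbb Q$ (values $A[U,W]$), $(\rho(S,T)A)[U,W]=A[US,WT]$. $\mathrm{Rec}_{p\times q}(\mathbb Q)$ is the set of $A$ whose linear span of $\{\rho(S,T)A\}$ is finite-dimensional. *)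

(* Defs.v *)
From mathcomp Require Import all_boot all_order all_algebra.
Set Implicit Arguments. Unset Strict Implicit. Unset Printing Implicit Defensive.
Import Order.TTheory GRing.Theory Num.Theory.
Local Open Scope ring_scope.

(* A function A : M_{p x q} -> Q is represented as a function on pairs of
   words (seq 'I_p, seq 'I_q); only its values on pairs of equal length
   (the elements of M_{p x q}) are meaningful. *)
Definition series (p q : nat) := seq 'I_p -> seq 'I_q -> rat.

Definition rho (p q : nat) (S : seq 'I_p) (T : seq 'I_q) (A : series p q)
  : series p q := fun U W => A (U ++ S) (W ++ T).

Definition Rec (p q : nat) (A : series p q) : Prop :=
  exists (k : nat) (B : 'I_k -> series p q),
    forall (S : seq 'I_p) (T : seq 'I_q), size S = size T ->
      exists c : 'I_k -> rat,
        forall (U : seq 'I_p) (W : seq 'I_q), size U = size W ->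
          rho S T A U W = \sum_(i < k) c i * B i U W.

(* Main.v *)
Require Import Defs.
From mathcomp Require Import all_boot all_order all_algebra.
From mathcomp Require Import zify ring.
From Stdlib Require Import ClassicalEpsilon Classical Lia.
Import Order.TTheory GRing.Theory Num.Theory.
Local Open Scope ring_scope.

Lemma den_seq (s : seq rat) : exists D : nat, (0 < D)%N /\
  forall r, r \in s -> (D%:R * r : rat) \is a Num.int.
Proof.
elim: s => [|r s [D [D0 HD]]]; first by exists 1%N.
exists (`|denq r| * D)%N; split.
  by rewrite muln_gt0 D0 andbT absz_gt0 denq_neq0.
move=> x; rewrite inE => /orP[/eqP->|xs].
  rewrite natrM mulrAC rpredM //; last by rewrite rpred_nat.
  by rewrite natr_absz gtr0_norm ?denq_gt0 // mulrC -numqE intr_int.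
by rewrite natrM -mulrA rpredM ?rpred_nat ?HD.
Qed.

Lemma den_fin (I : finType) (f : I -> rat) : exists D : nat, (0 < D)%N /\
  forall i, (D%:R * f i : rat) \is a Num.int.
Proof.
have [D [D0 HD]] := den_seq (map f (enum I)).
exists D; split => // i; apply: HD; apply: map_f; by rewrite mem_enum.
Qed.

Lemma int_mulnat (D E : nat) (r : rat) : (D%:R * r) \is a Num.int ->
  ((D * E)%:R * r) \is a Num.int.
Proof. by move=> h; rewrite natrM mulrAC rpredM ?rpred_nat. Qed.

Definition ev (p q k : nat) (B : 'I_k -> series p q) (v : 'rV[rat]_k)
  (U : seq 'I_p) (W : seq 'I_q) : rat := \sum_(i < k) v 0 i * B i U W.

Arguments ev {p q k}.

Lemma ev_sum p q k (B : 'I_k -> series p q) d (l : 'I_d -> rat)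
  (X : 'I_d -> 'rV[rat]_k) U W :
  ev B (\sum_(j < d) l j *: X j) U W = \sum_(j < d) l j * ev B (X j) U W.
Proof.
rewrite /ev; under eq_bigr => i _ do rewrite summxE big_distrl /=.
rewrite exchange_big /=; apply: eq_bigr => j _; rewrite big_distrr /=.
by apply: eq_bigr => i _; rewrite mxE mulrA.
Qed.

Lemma span_exists p q k (cf : seq 'I_p -> seq 'I_q -> 'rV[rat]_k) :
  exists L : seq (seq 'I_p * seq 'I_q),
    all (fun P => size P.1 == size P.2) L /\
    forall S T, size S = size T ->
      cf S T \in <<map (fun P => cf P.1 P.2) L>>%VS.
Proof.
suff: forall m L, all (fun P => size P.1 == size P.2) L ->
   (k - \dim <<map (fun P => cf P.1 P.2) L>> <= m)%N ->
  exists L : seq (seq 'I_p * seq 'I_q),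
    all (fun P => size P.1 == size P.2) L /\
    forall S T, size S = size T ->
      cf S T \in <<map (fun P => cf P.1 P.2) L>>%VS.
  by move=> /(_ k [::]); apply => //; rewrite leq_subr.
elim=> [|m IH] L HL Hm.
  exists L; split => // S T _.
  have hd : \dim <<map (fun P => cf P.1 P.2) L>> = \dim (fullv : {vspace 'rV[rat]_k}).
    apply/eqP; rewrite eqn_leq dimvS ?subvf //= dimvf /dim /= mul1n.
    by rewrite -subn_eq0 -leqn0.
  have /eqP -> : (<<map (fun P => cf P.1 P.2) L>>%VS == fullv).
    by rewrite -(dimv_leqif_eq (subvf _)) hd.
  exact: memvf.
case: (classic (forall S T, size S = size T ->
      cf S T \in <<map (fun P => cf P.1 P.2) L>>%VS)) => [H|H].
  by exists L.
have [S [T [ST nin]]] : exists S T, size S = size T /\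
    cf S T \notin <<map (fun P => cf P.1 P.2) L>>%VS.
  apply: NNPP => H'; apply: H => S T ST; apply: NNPP => H2.
  by apply: H'; exists S, T; split => //; apply/negP.
apply: (IH ((S, T) :: L)).
  by rewrite /= ST eqxx.
set X := map (fun P => cf P.1 P.2) L.
have sub : (<<X>> <= <<cf S T :: X>>)%VS.
  by apply: sub_span => x xX; rewrite inE xX orbT.
have lt : (\dim <<X>> < \dim <<cf S T :: X>>)%N.
  rewrite (ltn_leqif (dimv_leqif_sup sub)); apply/negP => /subvP h.
  by move: nin; rewrite h // memv_span // inE eqxx.
have le : (\dim <<cf S T :: X>> <= k)%N.
  by rewrite (leq_trans (dimvS (subvf _))) // dimvf /dim /= mul1n.
rewrite /= -/X; move: Hm; rewrite -/X; lia.
Qed.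

Theorem mainTheorem9 (p q : nat) (A : series p q) :
  Rec A ->
  exists N : nat, (0 < N)%N /\
    forall (n : nat) (U : seq 'I_p) (W : seq 'I_q),
      size U = n -> size W = n ->
      (N%:R ^+ n.+1 * A U W : rat) \is a Num.int.
Proof.
move=> [k [B HB]].
have H1 : forall S T, exists c : 'rV[rat]_k, size S = size T ->
    forall U W, size U = size W -> rho S T A U W = ev B c U W.
  move=> S T; case: (eqVneq (size S) (size T)) => [e|ne]; last first.
    by exists 0 => e; move: ne; rewrite e eqxx.
  have [c hc] := HB S T e; exists (\row_i c i) => _ U W UW.
  by rewrite hc // /ev; apply: eq_bigr => i _; rewrite mxE.
pose cf S T := proj1_sig (constructive_indefinite_description _ (H1 S T)).
have Hcf : forall S T, size S = size T -> forall U W, size U = size W ->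
    rho S T A U W = ev B (cf S T) U W.
  by move=> S T; exact: (proj2_sig (constructive_indefinite_description _ (H1 S T))).
have [L [HL HLs]] := @span_exists p q k cf.
set X := map (fun P => cf P.1 P.2) L in HLs.
pose Sj (j : 'I_(size X)) := (nth ([::], [::]) L j).1.
pose Tj (j : 'I_(size X)) := (nth ([::], [::]) L j).2.
have jL : forall j : 'I_(size X), (j < size L)%N.
  by move=> j; rewrite -(size_map (fun P => cf P.1 P.2)) ltn_ord.
have HXj : forall j : 'I_(size X), X`_j = cf (Sj j) (Tj j).
  by move=> j; rewrite /X (nth_map ([::], [::])).
have HSTj : forall j, size (Sj j) = size (Tj j).
  by move=> j; move/(all_nthP ([::], [::])): HL => /(_ j (jL j)) /eqP.
have H2 : forall S T, exists l : 'I_(size X) -> rat, size S = size T ->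
    forall U W, size U = size W ->
    rho S T A U W = \sum_j l j * rho (Sj j) (Tj j) A U W.
  move=> S T; exists (fun j => coord (in_tuple X) j (cf S T)) => ST U W UW.
  have E := coord_span (HLs S T ST : cf S T \in <<in_tuple X>>%VS).
  rewrite Hcf // {1}E ev_sum; apply: eq_bigr => j _.
  by rewrite /= HXj -Hcf.
pose lam S T := proj1_sig (constructive_indefinite_description _ (H2 S T)).
have Hlam : forall S T, size S = size T -> forall U W, size U = size W ->
    rho S T A U W = \sum_j lam S T j * rho (Sj j) (Tj j) A U W.
  by move=> S T; exact: (proj2_sig (constructive_indefinite_description _ (H2 S T))).
have [D1 [D10 HD1]] := @den_fin _ (fun t : 'I_p * 'I_q * 'I_(size X) * 'I_(size X) =>
   lam (t.1.1.1 :: Sj t.1.2) (t.1.1.2 :: Tj t.1.2) t.2).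
have [D2 [D20 HD2]] := @den_fin _ (fun i : 'I_(size X) => lam [::] [::] i).
have [D3 [D30 HD3]] := @den_fin _ (fun j : 'I_(size X) => A (Sj j) (Tj j)).
pose D := (D1 * D2 * D3)%N.
have D0 : (0 < D)%N by rewrite /D !muln_gt0 D10 D20 D30.
have G1 : forall x y j i, D%:R * lam (x :: Sj j) (y :: Tj j) i \is a Num.int.
  move=> x y j i; rewrite /D -mulnA.
  by apply: int_mulnat; exact: (HD1 (x, y, j, i)).
have G2 : forall i, D%:R * lam [::] [::] i \is a Num.int.
  by move=> i; rewrite /D mulnAC mulnC; apply: int_mulnat; exact: HD2.
have G3 : forall j, D%:R * A (Sj j) (Tj j) \is a Num.int.
  by move=> j; rewrite /D mulnC; apply: int_mulnat; exact: HD3.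
have Claim : forall n U W, size U = n -> size W = n -> forall j,
    D%:R ^+ n.+1 * rho (Sj j) (Tj j) A U W \is a Num.int.
  elim=> [|n IH] U W.
    by move=> /size0nil -> /size0nil -> j; rewrite expr1; exact: G3.
  case/lastP: U => [//|U x]; case/lastP: W => [//|W y].
  rewrite !size_rcons => -[sU] [sW] j.
  have -> : rho (Sj j) (Tj j) A (rcons U x) (rcons W y)
      = rho (x :: Sj j) (y :: Tj j) A U W.
    by rewrite /rho -!cats1 -!catA.
  rewrite Hlam /= ?HSTj ?sU ?sW // mulr_sumr; apply: rpred_sum => i _.
  have -> : D%:R ^+ n.+2 * (lam (x :: Sj j) (y :: Tj j) i * rho (Sj i) (Tj i) A U W)
      = (D%:R * lam (x :: Sj j) (y :: Tj j) i) * (D%:R ^+ n.+1 * rho (Sj i) (Tj i) A U W).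
    by rewrite exprS; ring.
  by rewrite rpredM ?G1 ?IH.
exists (D * D)%N; split; first by rewrite muln_gt0 D0.
move=> n U W sU sW.
have -> : A U W = rho [::] [::] A U W by rewrite /rho !cats0.
rewrite Hlam // ?sU ?sW // mulr_sumr; apply: rpred_sum => i _.
have -> : (D * D)%:R ^+ n.+1 * (lam [::] [::] i * rho (Sj i) (Tj i) A U W)
    = D%:R ^+ n * ((D%:R * lam [::] [::] i) * (D%:R ^+ n.+1 * rho (Sj i) (Tj i) A U W)).
  by rewrite natrM exprMn !exprS; ring.
by rewrite rpredM ?rpredX ?rpred_nat // rpredM ?G2 ?Claim.
Qed.
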